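(* For every $B\in B_{2n}(P_{2n})$ (i.e. every lower unitriangular symplectic $2n\times 2n$ matrix over $\mathbb{F}$), $$B=S_{2n,V_n(B)e_{n,1},1}\,S_{2n,V_n(B)e_{n,2},2}\cdots S_{2n,V_n(B)e_{n,n},n}.$$
   Context: $\mathbb{F}$ is the field with two elements, $e_{N,i}$ the $i$-th standard basis column vector of $\mathbb{F}^N$, $I_N$ the identity, $[N]=\{1,\dots,N\}$. $R_{2n}=\sum_{i=1}^{2n}e_{2n,i}e_{2n,2n+1-i}^{\top}$; $\mathrm{Sp}_{2n}=\{C\in\mathbb{F}^{2n\times2n}:C^{\top}R_{2n}C=R_{2n}\}$. $P_{2n}=\{(i,j):i,j\in[2n],i>j\}$ and $B_{2n}(P_{2n})=\big(I_{2n}+\mathrm{span}\{e_{2n,i}e_{2n,j}^{\top}:(i,j)\in P_{2n}\}\big)\cap\mathrm{Sp}_{2n}$. For $i\in[2n]$ and $v=\sum_j v_je_{2n,j}\in\mathbb{F}^{2n}$ with $v_i=0$, $S_{2n,v,i}=I_{2n}+v e_{2n,i}^{\top}+R_{2n}e_{2n,i}v^{\top}R_{2n}+v_{2n+1-i}e_{2n,2n+1-i}e_{2n,i}^{\top}$. $V_n:\mathbb{F}^{2n\times2n}\to\mathbb{F}^{2n\times n}$ is the linear map $V_n(B)=\sum_{j=1}^n\sum_{i=j+1}^{2n+1-j}e_{2n,i}e_{2n,i}^{\top}Be_{2n,j}e_{n,j}^{\top}$ (so $V_n(B)e_{n,j}$ is the part of column $j$ of $B$ in rows $j+1,\dots,2n+1-j$,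 and has zero $j$-th entry). *)

(* Defs.v *)
From HB Require Import structures.
From mathcomp Require Import all_boot all_order all_algebra.
Set Implicit Arguments. Unset Strict Implicit. Unset Printing Implicit Defensive.
Import GRing.Theory.
Local Open Scope ring_scope.

(* Indices are 0-based ordinals: the paper's index i in [N] corresponds to
   the ordinal i-1 : 'I_N.  The paper's e_{N,i} e_{N,j}^T is delta_mx (i-1) (j-1),
   and the paper's 2n+1-i corresponds to rev_ord. *)

Notation F := 'F_2.

Definition Rmx (N : nat) : 'M[F]_N :=
  \sum_(i < N) delta_mx i (rev_ord i).

Definition symplectic (N : nat) (C : 'M[F]_N) : bool :=
  C^T *m Rmx N *m C == Rmx N.

Definition in_BP (N : nat) (B : 'M[F]_N) : bool :=
  [forall i : 'I_N, forall j : 'I_N,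
     (i <= j)%N ==> (B i j == (i == j)%:R)] && symplectic B.

Definition Smx (N : nat) (v : 'cV[F]_N) (k : 'I_N) : 'M[F]_N :=
  1%:M + v *m (delta_mx k 0 : 'cV[F]_N)^T
       + Rmx N *m (delta_mx k 0 : 'cV[F]_N) *m v^T *m Rmx N
       + v (rev_ord k) 0 *: delta_mx (rev_ord k) k.

Lemma leq_n_2n (n : nat) : (n <= 2 * n)%N.
Proof. by rewrite mul2n -addnn leq_addr. Qed.

Definition ordL (n : nat) (j : 'I_n) : 'I_(2 * n) := widen_ord (leq_n_2n n) j.

(* V_n(B): column j (0-based) keeps rows r with j < r <= 2n-1-j (0-based),
   i.e. paper rows j+1 .. 2n+1-j in 1-based indexing. *)
Definition Vn (n : nat) (B : 'M[F]_(2 * n)) : 'M[F]_(2 * n, n) :=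
  \matrix_(r < 2 * n, j < n)
     (if ((j < r)%N && (r + j < 2 * n)%N) then B r (ordL j) else 0).

(* Main.v *)
Require Import Defs.
From HB Require Import structures.
From mathcomp Require Import all_boot all_order all_algebra.
From mathcomp Require Import zify ring.
Set Implicit Arguments. Unset Strict Implicit. Unset Printing Implicit Defensive.
Import GRing.Theory.
Local Open Scope ring_scope.



Lemma F2_dbl (x : 'F_2) : x + x = 0.
Proof. by case: x => -[|[|//]] ?; apply/val_inj. Qed.

Lemma F2_two : (2%:R : 'F_2) = 0.
Proof. by apply/val_inj. Qed.

Lemma rev_eq N (c s : 'I_N) : (c == rev_ord s) = (s == rev_ord c).
Proof. by apply/eqP/eqP => ->; rewrite rev_ordK. Qed.

Lemma sum_ind N (a : 'I_N) (f : 'I_N -> 'F_2) :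
  \sum_c (c == a)%:R * f c = f a.
Proof.
rewrite (bigD1 a) //= eqxx mul1r big1 ?addr0 // => c /negbTE ->.
by rewrite mul0r.
Qed.

Lemma Rmx_entry N (i j : 'I_N) : Rmx N i j = (j == rev_ord i)%:R.
Proof.
rewrite /Rmx summxE (bigD1 i) //= mxE eqxx /= big1 ?addr0 // => l /negbTE.
by rewrite mxE eq_sym => ->.
Qed.

Lemma Smx_entry N (v : 'cV['F_2]_N) k r c :
  Smx v k r c = (r == c)%:R + v r 0 * (c == k)%:R
    + (r == rev_ord k)%:R * v (rev_ord c) 0
    + v (rev_ord k) 0 * ((r == rev_ord k) && (c == k))%:R.
Proof.
rewrite /Smx !mxE.
congr (_ + _ + _ + _).
- by rewrite big_ord1 !mxE eqxx andbT.
- rewrite (bigD1 (rev_ord c)) //= big1 ?addr0.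
    rewrite !mxE big_ord1 !mxE Rmx_entry rev_ordK eqxx mulr1.
    rewrite (bigD1 k) //= big1 ?addr0; last first.
      by move=> s /negbTE; rewrite mxE => ->; rewrite andFb mulr0.
    by rewrite mxE eqxx andbT mulr1 Rmx_entry -rev_eq.
  move=> s Hs; rewrite Rmx_entry rev_eq (negbTE Hs) mulr0 //.
Qed.



Lemma sympl_entry N (A : 'M['F_2]_N) a b :
  (A^T *m Rmx N *m A) a b = \sum_c A (rev_ord c) a * A c b.
Proof.
rewrite mxE; apply: eq_bigr => c _; congr (_ * _).
rewrite mxE (bigD1 (rev_ord c)) //= big1 ?addr0.
  by rewrite mxE Rmx_entry rev_ordK eqxx mulr1.
by move=> d Hd; rewrite Rmx_entry rev_eq (negbTE Hd) mulr0.
Qed.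

Lemma symplP N (A : 'M['F_2]_N) :
  symplectic A <-> forall a b, \sum_c A (rev_ord c) a * A c b = (b == rev_ord a)%:R.
Proof.
rewrite /symplectic; split.
  by move=> /eqP H a b; rewrite -sympl_entry H Rmx_entry.
by move=> H; apply/eqP/matrixP => a b; rewrite sympl_entry H Rmx_entry.
Qed.

Definition lowU N (A : 'M['F_2]_N) := forall i j : 'I_N, (i <= j)%N -> A i j = (i == j)%:R.

Lemma in_BPP N (A : 'M['F_2]_N) : in_BP A <-> lowU A /\ symplectic A.
Proof.
rewrite /in_BP; split.
  move=> /andP[/forallP H1 H2]; split => // i j Hij.
  by move: (H1 i) => /forallP /(_ j) /implyP /(_ Hij) /eqP.
move=> [H1 H2]; rewrite H2 andbT; apply/forallP => i; apply/forallP => j.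
by apply/implyP => Hij; rewrite H1.
Qed.

Lemma lowU_mul N (A B : 'M['F_2]_N) : lowU A -> lowU B -> lowU (A *m B).
Proof.
move=> HA HB i j Hij; rewrite mxE (bigD1 i) //= big1 ?addr0.
  by rewrite HA // eqxx mul1r HB.
move=> s Hs; case: (ltnP i s) => His.
  by rewrite HA ?(ltnW His) // eq_sym (negbTE Hs) mul0r.
rewrite (HB s j); last by apply: leq_trans His Hij.
have -> : (s == j) = false.
  apply/negbTE; apply: contra Hs => /eqP Esj; subst s.
  by apply/eqP/val_inj/eqP; rewrite eqn_leq His Hij.
by rewrite mulr0.
Qed.

Lemma sympl_mul N (A B : 'M['F_2]_N) : symplectic A -> symplectic B -> symplectic (A *m B).
Proof.
rewrite /symplectic => /eqP HA /eqP HB; apply/eqP.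
rewrite trmx_mul.
have -> : B^T *m A^T *m Rmx N *m (A *m B) = B^T *m (A^T *m Rmx N *m A) *m B.
  by rewrite !mulmxA.
by rewrite HA.
Qed.

Lemma BP_mul N (A B : 'M['F_2]_N) : in_BP A -> in_BP B -> in_BP (A *m B).
Proof.
move=> /in_BPP[? ?] /in_BPP[? ?]; apply/in_BPP; split.
  exact: lowU_mul. exact: sympl_mul.
Qed.

Lemma BP_1 N : in_BP (1%:M : 'M['F_2]_N).
Proof.
apply/in_BPP; split.
  by move=> i j _; rewrite mxE.
by rewrite /symplectic trmx1 mul1mx mulmx1.
Qed.

Lemma omega_self n (v : 'cV['F_2]_(2 * n)) :
  \sum_c v (rev_ord c) 0 * v c 0 = 0.
Proof.
rewrite (bigID (fun c : 'I_(2 * n) => (c < n)%N)) /=.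
rewrite [X in _ + X = _](reindex_inj rev_ord_inj) /=.
rewrite [X in _ + X = _](eq_bigl (fun c : 'I_(2 * n) => (c < n)%N)); last first.
  move=> c /=; apply/negP/idP => H; move: (ltn_ord c) => Hc; lia.
rewrite [X in _ + X = _](eq_bigr (fun c => v (rev_ord c) 0 * v c 0)).
  exact: F2_dbl.
by move=> c _; rewrite rev_ordK mulrC.
Qed.



Definition supp n (v : 'cV['F_2]_(2 * n)) (k : 'I_(2 * n)) :=
  forall r : 'I_(2 * n), ~~ ((k < r)%N && (r + k < 2 * n)%N) -> v r 0 = 0.

Lemma Smx_lowU n (v : 'cV['F_2]_(2 * n)) (k : 'I_(2 * n)) :
  (k < n)%N -> supp v k -> lowU (Smx v k).
Proof.
move=> kn Hv i j Hij; rewrite Smx_entry.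
have -> : v i 0 * (j == k)%:R = 0.
  case: eqP => [E|]; last by rewrite mulr0.
  by subst j; rewrite Hv ?mul0r //; apply/negP => /andP[H _]; lia.
have -> : (i == rev_ord k)%:R * v (rev_ord j) 0 = 0.
  case: eqP => [E|]; last by rewrite mul0r.
  subst i; rewrite Hv ?mulr0 //; apply/negP => /andP[H _]; move: Hij H => /=.
  move: (ltn_ord j) => ?; lia.
have -> : ((i == rev_ord k) && (j == k)) = false.
  apply/negP => /andP[/eqP E /eqP E']; subst i j; move: Hij => /=; lia.
by rewrite mulr0 !addr0.
Qed.

Lemma rev_eq2 N (c a : 'I_N) : (rev_ord c == a) = (c == rev_ord a).
Proof. by apply/eqP/eqP => [<-|->]; rewrite rev_ordK. Qed.

Lemma Smx_sympl n (v : 'cV['F_2]_(2 * n)) (k : 'I_(2 * n)) :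
  (k < n)%N -> supp v k -> symplectic (Smx v k).
Proof.
move=> kn Hv; apply/symplP => a b.
have vk : v k 0 = 0 by apply: Hv; rewrite ltnn.
have kk : (k == rev_ord k) = false.
  by apply/negP => /eqP/(congr1 val) /=; lia.
set al := ((a == k)%:R : 'F_2).
set be := v (rev_ord a) 0 + al * v (rev_ord k) 0.
set Y := fun c => Smx v k c b.
rewrite (eq_bigr (fun c => (c == rev_ord a)%:R * Y c + (c == k)%:R * (be * Y c)
            + al * (v (rev_ord c) 0 * Y c))); last first.
  move=> c _; rewrite /Y Smx_entry rev_eq2 (inj_eq rev_ord_inj) /be /al.
  case: (c =P k) => [->|_]; rewrite ?eqxx ?kk /=; ring.
rewrite !big_split /= !sum_ind -mulr_sumr.
rewrite /Y.
rewrite (eq_bigr (fun c => (c == b)%:R * v (rev_ord c) 0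
    + (b == k)%:R * (v (rev_ord c) 0 * v c 0)
    + (c == rev_ord k)%:R * (v (rev_ord c) 0 * (v (rev_ord b) 0 + v (rev_ord k) 0 * (b == k)%:R)))); last first.
  move=> c _; rewrite Smx_entry; case: (c =P rev_ord k) => [->|_] /=; ring.
rewrite !big_split /= !sum_ind.
rewrite -mulr_sumr omega_self rev_ordK vk.
rewrite !Smx_entry vk (inj_eq rev_ord_inj) kk /= /be /al.
rewrite (eq_sym (rev_ord a) b) (eq_sym k b).
move: (v (rev_ord a) 0) (v (rev_ord b) 0) (v (rev_ord k) 0) (a == k) (b == k) (b == rev_ord a).
by do 3! (case=> -[|[|//]] ?); do 3! case; apply/val_inj.
Qed.



Lemma F2_opp (x : 'F_2) : - x = x.
Proof. by case: x => -[|[|//]] ?; apply/val_inj. Qed.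

Lemma lowU_lt N (A : 'M['F_2]_N) (r c : 'I_N) : lowU A -> (r < c)%N -> A r c = 0.
Proof.
move=> H rc; rewrite H ?(ltnW rc) //; case: eqP => // E; subst; by rewrite ltnn in rc.
Qed.

Lemma lowU_diag N (A : 'M['F_2]_N) (r : 'I_N) : lowU A -> A r r = 1.
Proof. by move=> H; rewrite H // eqxx. Qed.

Lemma sum_ind_r N (a : 'I_N) (f : 'I_N -> 'F_2) :
  \sum_c f c * (c == a)%:R = f a.
Proof. by rewrite -(sum_ind a f); apply: eq_bigr => c _; rewrite mulrC. Qed.

Lemma Smx_mul_entry N (v : 'cV['F_2]_N) (k : 'I_N) (x : 'cV['F_2]_N) (r : 'I_N) :
  (Smx v k *m x) r 0 = x r 0 + v r 0 * x k 0
    + (r == rev_ord k)%:R * (\sum_c v (rev_ord c) 0 * x c 0)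
    + v (rev_ord k) 0 * (r == rev_ord k)%:R * x k 0.
Proof.
rewrite mxE (eq_bigr (fun c => (c == r)%:R * x c 0 + v r 0 * ((c == k)%:R * x c 0)
   + (r == rev_ord k)%:R * (v (rev_ord c) 0 * x c 0)
   + v (rev_ord k) 0 * (r == rev_ord k)%:R * ((c == k)%:R * x c 0))); last first.
  move=> c _; rewrite Smx_entry (eq_sym r c); case: (r == rev_ord k); case: (c == k) => /=; ring.
by rewrite !big_split /= -!mulr_sumr !sum_ind.
Qed.

Lemma BP_unique n (B C : 'M['F_2]_(2 * n)) : in_BP B -> in_BP C ->
  (forall j : 'I_(2 * n), (j < n)%N -> forall r, B r j = C r j) -> B = C.
Proof.
move=> /in_BPP[LB /symplP SB] /in_BPP[LC /symplP SC] H; apply/matrixP => r c.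
case: (ltnP c n) => cn; first by apply: H.
suff: forall m (r0 : 'I_(2 * n)), (r0 < m)%N -> B r0 c = C r0 c by apply => //.
elim=> [//|m IH] r0 Hr.
case: (leqP r0 c) => Hrc; first by rewrite LB // LC.
have an : (rev_ord r0 < n)%N by rewrite /=; move: (ltn_ord r0) => ?; lia.
have EB := SB (rev_ord r0) c; have EC := SC (rev_ord r0) c.
rewrite rev_ordK (_ : (c == r0) = false) in EB EC; last first.
  by apply/negP => /eqP E; subst; rewrite ltnn in Hrc.
rewrite (bigD1 r0) //= in EB; rewrite (bigD1 r0) //= in EC.
rewrite !lowU_diag // !mul1r in EB EC.
have E : \sum_(i < 2 * n | i != r0) B (rev_ord i) (rev_ord r0) * B i c
       = \sum_(i < 2 * n | i != r0) C (rev_ord i) (rev_ord r0) * C i c.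
  apply: eq_bigr => s Hs; case: (ltnP s r0) => sr.
    have sm : (s < m)%N by rewrite ltnS in Hr; exact: leq_trans sr Hr.
    by rewrite (H (rev_ord r0) an) (IH s sm).
  have sr' : (r0 < s)%N by rewrite ltn_neqAle sr andbT; apply: contra Hs => /eqP E; apply/eqP/val_inj.
  have hs : (rev_ord s < rev_ord r0)%N by rewrite /=; move: (ltn_ord s) => ?; lia.
  by rewrite (lowU_lt LB hs) (lowU_lt LC hs) !mul0r.
move/eqP: EB; rewrite E addr_eq0 => /eqP ->.
by move/eqP: EC; rewrite addr_eq0 => /eqP ->.
Qed.



Definition Fm n (B : 'M['F_2]_(2 * n)) (j : 'I_n) := Smx (col j (Vn B)) (ordL j).
Definition Gm n (B : 'M['F_2]_(2 * n)) (t : nat) : 'M['F_2]_(2 * n) :=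
  match (insub t : option 'I_n) with Some j => Fm B j | None => 1%:M end.
Definition Pm n (B : 'M['F_2]_(2 * n)) (i : nat) :=
  \big[@mulmx 'F_2 (2 * n) (2 * n) (2 * n) / 1%:M]_(i <= t < n) Gm B t.

Lemma Gm_lt n (B : 'M['F_2]_(2 * n)) i (Hi : (i < n)%N) : Gm B i = Fm B (Ordinal Hi).
Proof. by rewrite /Gm insubT. Qed.

Lemma Vn_supp n (B : 'M['F_2]_(2 * n)) (j : 'I_n) : supp (col j (Vn B)) (ordL j).
Proof. by move=> r H; rewrite !mxE /= (negbTE H). Qed.

Lemma Fm_BP n (B : 'M['F_2]_(2 * n)) j : in_BP (Fm B j).
Proof.
apply/in_BPP; split; [apply: Smx_lowU | apply: Smx_sympl].
- exact: (ltn_ord j).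
- exact: (@Vn_supp n B j).
- exact: (ltn_ord j).
- exact: (@Vn_supp n B j).
Qed.

Lemma Pm_BP n (B : 'M['F_2]_(2 * n)) i : in_BP (Pm B i).
Proof.
rewrite /Pm; elim/big_ind: _ => //; [exact: BP_1 | exact: BP_mul |].
move=> t _; rewrite /Gm; case: insub => [j|]; [exact: Fm_BP | exact: BP_1].
Qed.

Lemma Pm_step n (B : 'M['F_2]_(2 * n)) i (Hi : (i < n)%N) :
  Pm B i = Fm B (Ordinal Hi) *m Pm B i.+1.
Proof. by rewrite /Pm big_ltn // Gm_lt. Qed.

Lemma Pm_n n (B : 'M['F_2]_(2 * n)) : Pm B n = 1%:M.
Proof. by rewrite /Pm big_geq. Qed.

Lemma Vn_entry n (B : 'M['F_2]_(2 * n)) (j : 'I_n) r :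
  col j (Vn B) r 0 = if ((j < r)%N && (r + j < 2 * n)%N) then B r (ordL j) else 0.
Proof. by rewrite !mxE. Qed.



Definition ev n (k : 'I_(2 * n)) : 'cV['F_2]_(2 * n) := delta_mx k 0.
Definition yv n (B : 'M['F_2]_(2 * n)) (k : 'I_(2 * n)) (i : nat) : 'cV['F_2]_(2 * n) :=
  \col_r (if (r + i < 2 * n)%N then B r k else 0).

Lemma ev_entry n (k r : 'I_(2 * n)) : ev k r 0 = (r == k)%:R.
Proof. by rewrite mxE eqxx andbT. Qed.

Lemma step_a n (B : 'M['F_2]_(2 * n)) (jo io : 'I_n) : (jo < io)%N ->
  Fm B io *m ev (ordL jo) = ev (ordL jo).
Proof.
move=> ji; apply/matrixP => r c; rewrite (ord1 c) Smx_mul_entry.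
under eq_bigr do rewrite ev_entry.
rewrite sum_ind_r !ev_entry Vn_entry.
have -> : (ordL io == ordL jo) = false.
  by apply/negP => /eqP/(congr1 val) /= E; rewrite E ltnn in ji.
rewrite (Vn_entry B io (rev_ord (ordL jo))).
have -> : (rev_ord (ordL jo) + io < 2 * n)%N = false.
  by apply/negP; rewrite /=; move: (ltn_ord jo) => ?; lia.
by rewrite andbF !mulr0 !addr0.
Qed.

Lemma step_b0 n (B : 'M['F_2]_(2 * n)) (jo : 'I_n) : in_BP B ->
  Fm B jo *m ev (ordL jo) = yv B (ordL jo) jo.
Proof.
move=> /in_BPP[LB SB]; apply/matrixP => r c; rewrite (ord1 c) Smx_mul_entry.
under eq_bigr do rewrite ev_entry.
rewrite sum_ind_r !ev_entry eqxx !mulr1.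
rewrite -addrA (mulrC (_%:R)) F2_dbl addr0 Vn_entry mxE.
case: (ltngtP r jo) => Hr.
- have -> : (r == ordL jo) = false.
    by apply/negP => /eqP/(congr1 val) /= E; rewrite E ltnn in Hr.
  rewrite andFb add0r; case: ifP => // _.
  by rewrite (lowU_lt LB).
- have -> : (r == ordL jo) = false.
    by apply/negP => /eqP/(congr1 val) /= E; rewrite E ltnn in Hr.
  by rewrite add0r.
- have E : r = ordL jo by apply: val_inj.
  subst r; rewrite eqxx /= addr0 lowU_diag //.
  by have -> : (jo + jo < 2 * n)%N by move: (ltn_ord jo) => ?; lia.
Qed.

Lemma key_sum n (B : 'M['F_2]_(2 * n)) (jo io : 'I_n) : in_BP B -> (io < jo)%N ->
  \sum_c col io (Vn B) (rev_ord c) 0 * yv B (ordL jo) io.+1 c 0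
  = B (rev_ord (ordL io)) (ordL jo).
Proof.
move=> /in_BPP[LB /symplP SB] ij.
have := SB (ordL io) (ordL jo).
have -> : (ordL jo == rev_ord (ordL io)) = false.
  by apply/negP => /eqP/(congr1 val) /=; move: (ltn_ord io) (ltn_ord jo) => ? ?; lia.
rewrite (eq_bigr (fun c => col io (Vn B) (rev_ord c) 0 * yv B (ordL jo) io.+1 c 0
   + (c == rev_ord (ordL io))%:R * B (rev_ord (ordL io)) (ordL jo))); last first.
  move=> c _; rewrite Vn_entry mxE.
  case: (ltngtP c (rev_ord (ordL io))) => /= Hc.
  - have -> : (c == rev_ord (ordL io)) = false.
      by apply/negP => /eqP/(congr1 val) /= E; rewrite E ltnn in Hc.
    have -> : (io < 2 * n - c.+1)%N by lia.
    have -> : (c + io.+1 < 2 * n)%N by lia.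
    rewrite mul0r addr0 /=.
    case: (leqP io c) => ic.
      by have -> : (2 * n - c.+1 + io < 2 * n)%N by lia.
    have -> : (2 * n - c.+1 + io < 2 * n)%N = false by lia.
    by rewrite (lowU_lt LB (r:=c)) ?mulr0 ?mul0r //= ; lia.
  - have -> : (c == rev_ord (ordL io)) = false.
      by apply/negP => /eqP/(congr1 val) /= E; rewrite E ltnn in Hc.
    have -> : (c + io.+1 < 2 * n)%N = false by lia.
    rewrite mulr0 mul0r addr0 (lowU_lt LB (r:=rev_ord c) (c:=ordL io)) ?mul0r //=; move: (ltn_ord c) => ?; lia.
  - have E : c = rev_ord (ordL io) by apply: val_inj.
    subst c; rewrite eqxx rev_ordK lowU_diag // mul1r /=.
    have -> : (2 * n - io.+1 + io.+1 < 2 * n)%N = false.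
      by move: (ltn_ord io) => ?; lia.
    by rewrite mulr0 add0r.
rewrite big_split /= sum_ind => /eqP; rewrite addr_eq0 F2_opp => /eqP.
by [].
Qed.

Lemma step_b n (B : 'M['F_2]_(2 * n)) (jo io : 'I_n) : in_BP B -> (io < jo)%N ->
  Fm B io *m yv B (ordL jo) io.+1 = yv B (ordL jo) io.
Proof.
move=> HB ij; have HB' := HB; move/in_BPP: HB' => [LB SB].
apply/matrixP => r c; rewrite (ord1 c) Smx_mul_entry key_sum //.
have -> : yv B (ordL jo) io.+1 (ordL io) 0 = 0.
  by rewrite mxE (lowU_lt LB) //; case: ifP.
rewrite !mulr0 !addr0 !mxE.
case: (r =P rev_ord (ordL io)) => [->|Hr].
  rewrite /=; move: (ltn_ord io) => ?.
  have -> : (2 * n - io.+1 + io.+1 < 2 * n)%N = false by lia.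
  have -> : (2 * n - io.+1 + io < 2 * n)%N by lia.
  by rewrite add0r mul1r.
rewrite mul0r addr0.
have Hr' : nat_of_ord r <> (2 * n - io.+1)%N.
  by move=> E; apply: Hr; apply: val_inj.
move: (ltn_ord r) => ?.
have -> : (r + io.+1 < 2 * n)%N = (r + io < 2 * n)%N.
  by apply/idP/idP => ?; lia.
by [].
Qed.

Lemma col_a n (B : 'M['F_2]_(2 * n)) (jo : 'I_n) :
  forall d i, (i + d = n)%N -> (jo < i)%N -> Pm B i *m ev (ordL jo) = ev (ordL jo).
Proof.
elim=> [|d IH] i Hid ji.
  by rewrite addn0 in Hid; subst i; rewrite Pm_n mul1mx.
have Hi : (i < n)%N by lia.
rewrite (Pm_step B Hi) -mulmxA IH; [|lia|lia].
by apply: step_a.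
Qed.

Lemma col_b n (B : 'M['F_2]_(2 * n)) (jo : 'I_n) : in_BP B ->
  forall d i, (i + d = jo)%N -> Pm B i *m ev (ordL jo) = yv B (ordL jo) i.
Proof.
move=> HB; elim=> [|d IH] i Hid.
  rewrite addn0 in Hid; subst i.
  rewrite (Pm_step B (ltn_ord jo)) -mulmxA (@col_a n B jo (n - jo.+1)); [|move: (ltn_ord jo); lia|lia].
  by rewrite (_ : Ordinal (ltn_ord jo) = jo) ?step_b0 //; apply: val_inj.
have Hi : (i < n)%N by move: (ltn_ord jo) => ?; lia.
rewrite (Pm_step B Hi) -mulmxA IH; last by lia.
by rewrite (step_b (io := Ordinal Hi)) //= ; lia.
Qed.

Theorem theorem1 (n : nat) (B : 'M['F_2]_(2 * n)) :
  in_BP B ->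
  B = \big[@mulmx 'F_2 (2 * n) (2 * n) (2 * n) / 1%:M]_(j < n)
        Smx (col j (Vn B)) (ordL j).
Proof.
move=> HB.
have -> : \big[@mulmx 'F_2 (2 * n) (2 * n) (2 * n) / 1%:M]_(j < n)
        Smx (col j (Vn B)) (ordL j) = Pm B 0.
  rewrite /Pm big_mkord; apply: eq_bigr => j _.
  by rewrite (Gm_lt B (ltn_ord j)) /Fm (_ : Ordinal (ltn_ord j) = j) //; apply: val_inj.
apply: BP_unique => //; first exact: Pm_BP.
move=> j jn r.
have -> : Pm B 0 r j = (Pm B 0 *m ev (ordL (Ordinal jn))) r 0.
  rewrite mxE (bigD1 j) //= big1 ?addr0.
    by rewrite ev_entry (_ : ordL (Ordinal jn) = j) ?eqxx ?mulr1 //; apply: val_inj.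
  move=> s Hs; rewrite ev_entry (_ : ordL (Ordinal jn) = j); last by apply: val_inj.
  by rewrite (negbTE Hs) mulr0.
rewrite (@col_b n B (Ordinal jn) HB j 0) //= mxE addn0 ltn_ord.
by rewrite (_ : ordL (Ordinal jn) = j) //; apply: val_inj.
Qed.
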